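(* Let $k$ be a field, $V$ a finite-dimensional $k$-vector space and $A$ a finite essential arrangement of linear hyperplanes in $V$ whose intersection lattice $L$ is Boolean (i.e. isomorphic to the lattice of subsets of $A$), with natural sheaf $F$ and $j$-th exterior power $\Lambda^jF$. If $rk L\ge1$ then $$\dim\mathrm{HC}_i(L;\Lambda^jF)=\begin{cases}1&\text{if }i=0\text{ and }j=rk L,\\0&\text{otherwise.}\end{cases}$$
   Context: $L$ consists of all intersections of subsets of $A$ (empty intersection $=V$), ordered by reverse inclusion, with $rk(x)=\operatorname{codim}x$ and $rk L=\operatorname{codim}\bigcap A$; essential means $\bigcap A=\{0\}$. A sheaf assigns a vector space $G(x)$ to each element and a linear map $G^y_x:G(y)\to G(x)$ for $x\le y$, functorially. Natural sheaf: $F(x)=x$, $F^y_x$ the inclusion $y\subseteq x$; $(\Lambda^jF)(x)=\Lambda^j(F(x))$ with maps $\Lambda^j(F^y_x)$. Cellular homology of $L$, viewed as the Boolean lattice on its atoms $\{a_1,\dots,a_n\}$ (an element corresponding to the set of atoms below it): homology of $C_k=\bigoplus_{rk(x)=k}G(x)$ with $d=\sum\varepsilon^x_yG^x_y$ over $y<x$ with $rk y=rk x-1$, where $\varepsilon^x_y=(-1)^{j-1}$ if $x$ corresponds to $\{a_{i_1},\dots,a_{i_k}\}$ ($i_1<\cdots<i_k$) and $y$ to that set with $a_{i_j}$ removed. *)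

(* Defs.v *)
From HB Require Import structures.
From mathcomp Require Import all_boot all_order all_algebra.
Set Implicit Arguments. Unset Strict Implicit. Unset Printing Implicit Defensive.
Import GRing.Theory.
Local Open Scope ring_scope.
Local Open Scope vspace_scope.

Section Arrangement.
Variables (K : fieldType) (V : vectType K) (m : nat).
(* An arrangement of m hyperplanes, indexed by 'I_m (the order on 'I_m is the
   ordering a_1 < ... < a_m of the atoms used for the signs). *)
Variable H : 'I_m -> {vspace V}.

Definition meet (S : {set 'I_m}) : {vspace V} := \bigcap_(a in S) H a.

Definition hyperplane_arrangement : Prop :=
  injective H /\ forall a, \dim (H a) = (\dim {: V}).-1.

Definition essential : Prop := meet setT = 0%VS.

Definition rkL : nat := (\dim {: V} - \dim (meet setT))%N.

(* L is Boolean: the map S |-> meet S from the subset lattice of A onto L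
   (L ordered by reverse inclusion) is a lattice isomorphism, i.e. an order
   isomorphism (it is surjective by definition of L). *)
Definition boolean_lattice : Prop :=
  forall S T : {set 'I_m}, (meet T <= meet S)%VS = (S \subset T).

Variable j : nat.
Local Notation n := (\dim {: V}).
(* ambient space for Lambda^j V: functions on j-tuples of coordinate indices *)
Definition ExtAmb := {ffun {ffun 'I_j -> 'I_n} -> K^o}.

Definition wedge (v : 'I_j -> V) : ExtAmb :=
  [ffun c : {ffun 'I_j -> 'I_n} =>
     (\det (\matrix_(a < j, b < j) coord (vbasis {: V}) (c b) (v a)) : K^o)].

(* Lambda^j(x) as the subspace of Lambda^j(V) spanned by the wedges of vectors
   of x (equivalently, of the basis vectors of x). *)
Definition ext_pow (x : {vspace V}) : {vspace ExtAmb} :=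
  <<[seq wedge (fun a => (vbasis x)`_(c a))
     | c : {ffun 'I_j -> 'I_(\dim x)}]>>.

(* total chain space: one summand G(x_S) per subset S (i.e. per element of L) *)
Definition Chains := {ffun {set 'I_m} -> ExtAmb}.

Definition inj_at (S : {set 'I_m}) (e : ExtAmb) : Chains :=
  [ffun T => if T == S then e else 0%R].

(* C_i = (+)_{rk x = i} Lambda^j(x); rk (meet S) = #|S| in the Boolean case *)
Definition chain_sp (i : nat) : {vspace Chains} :=
  (\sum_(S : {set 'I_m} | #|S| == i) (linfun (inj_at S) @: ext_pow (meet S)))%VS.

(* d = sum eps^x_y G^x_y ; the maps G^x_y are inclusions, hence identities on
   the ambient representation. x = T :|: {a}, y = T, eps = (-1)^(position-1). *)
Definition bdry (f : Chains) : Chains :=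
  [ffun T : {set 'I_m} =>
     (\sum_(a : 'I_m | a \notin T)
        ((-1) ^+ #|[set b in T | (b < a)%N]| : K) *: f (a |: T))%R].

Definition bdryL : 'End(Chains) := linfun bdry.

Definition dimHC (i : nat) : nat :=
  (\dim (chain_sp i :&: lker bdryL) - \dim (bdryL @: chain_sp i.+1))%N.

End Arrangement.

(* Main.v *)
Require Import Defs.
From HB Require Import structures.
From mathcomp Require Import all_boot all_order all_algebra.
From mathcomp Require Import fingroup perm.
Set Implicit Arguments. Unset Strict Implicit. Unset Printing Implicit Defensive.
Import GRing.Theory.
Local Open Scope ring_scope.

Lemma CB_row (R : comNzRingType) j p (A : 'M[R]_(j,p)) (Y : 'M[R]_(p,j)) :
  \det (A *m Y) = \sum_(c : {ffun 'I_j -> 'I_p})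
     (\prod_a A a (c a)) * \det (\matrix_(a, b) Y (c a) b).
Proof.
have E (s : 'S_j) : \prod_i (A *m Y) i (s i) =
   \sum_(c : {ffun 'I_j -> 'I_p}) \prod_i (A i (c i) * Y (c i) (s i)).
  rewrite (eq_bigr (fun i => \sum_k A i k * Y k (s i))); last by move=> i _; rewrite mxE.
  exact: bigA_distr_bigA.
rewrite /determinant (eq_bigr _ (fun s _ => congr1 (fun x => _ * x) (E s))).
under eq_bigr => s _ do rewrite big_distrr.
rewrite exchange_big /=; apply: eq_bigr => c _.
rewrite big_distrr /=; apply: eq_bigr => s _.
rewrite big_split /= mulrCA; congr (_ * (_ * _)).
by apply: eq_bigr => i _; rewrite mxE.
Qed.

Lemma CB_col (R : comNzRingType) j p (A : 'M[R]_(j,p)) (Y : 'M[R]_(p,j)) :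
  \det (A *m Y) = \sum_(c : {ffun 'I_j -> 'I_p})
     (\prod_b Y (c b) b) * \det (\matrix_(a, b) A a (c b)).
Proof.
rewrite -det_tr trmx_mul CB_row; apply: eq_bigr => c _.
congr (_ * _); first by apply: eq_bigr => i _; rewrite mxE.
rewrite -det_tr; congr (\det _); apply/matrixP => a b; rewrite !mxE //.
Qed.

Section FF.
Variables (R : nzRingType) (A : finType) (M : lmodType R).
Lemma ffZE k (f : {ffun A -> M}) x : (k *: f) x = k *: f x.
Proof. by rewrite ffunE. Qed.
Lemma ffDE (f g : {ffun A -> M}) x : (f + g) x = f x + g x.
Proof. by rewrite ffunE. Qed.
Lemma ffNE (f : {ffun A -> M}) x : (- f) x = - f x.
Proof. by rewrite ffunE. Qed.
Lemma ff0E x : (0 : {ffun A -> M}) x = 0.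
Proof. by rewrite ffunE. Qed.
End FF.

Section Wedge.
Variables (K : fieldType) (V : vectType K) (j : nat).
Local Notation n := (\dim {: V}).
Local Notation e := (vbasis {: V}).

Lemma wedgeE (v : 'I_j -> V) c :
  wedge v c = \det (\matrix_(a < j, b < j) coord e (c b) (v a) : 'M[K]_j).
Proof. by rewrite ffunE. Qed.

Lemma wedge_ML p (y : 'I_p -> V) (v : 'I_j -> V) (al : 'I_j -> 'I_p -> K) :
  (forall a, v a = \sum_k al a k *: y k) ->
  wedge v = \sum_(c : {ffun 'I_j -> 'I_p}) (\prod_a al a (c a)) *: wedge (fun a => y (c a)).
Proof.
move=> hv; apply/ffunP => c0; rewrite sum_ffunE wedgeE.
have -> : (\matrix_(a < j, b < j) coord e (c0 b) (v a) : 'M[K]_j) =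
   (\matrix_(a < j, k < p) al a k) *m (\matrix_(k < p, b < j) coord e (c0 b) (y k)).
  apply/matrixP => a b; rewrite !mxE hv linear_sum; apply: eq_bigr => k _.
  by rewrite linearZ !mxE.
rewrite CB_row; apply: eq_bigr => c _; rewrite ffZE wedgeE.
apply: congr2; first by apply: eq_bigr => a _; rewrite mxE.
congr (\det _).
by apply/matrixP => a b; rewrite !mxE.
Qed.

Lemma wedge_eq0 (v : 'I_j -> V) a1 a2 : a1 != a2 -> v a1 = v a2 -> wedge v = 0.
Proof.
move=> ne eqv; apply/ffunP => c; rewrite wedgeE ff0E.
by apply: (determinant_alternate ne) => b; rewrite !mxE eqv.
Qed.

Lemma wedge_0 (v : 'I_j -> V) a : v a = 0 -> wedge v = 0.
Proof.
move=> va; apply/ffunP => c; rewrite wedgeE ff0E /determinant.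
apply: big1 => s _; rewrite (bigD1 a) //= mxE va linear0 mul0r mulr0 //.
Qed.

Lemma ext_pow_small (x : {vspace V}) : (\dim x < j)%N -> ext_pow j x = 0%VS.
Proof.
move=> lt; apply/eqP; rewrite -subv0; apply/span_subvP => w /mapP [c _ ->].
rewrite memv0; apply/eqP.
have /injectivePn [a1 [a2 ne eqc]] : ~~ injectiveb c.
  apply/negP => /injectiveP inj; move: (leq_card c inj); rewrite !card_ord.
  by rewrite leqNgt lt.
by apply: (wedge_eq0 ne); rewrite eqc.
Qed.


Definition lamf (f : 'End(V)) (F : ExtAmb V j) : ExtAmb V j :=
  [ffun c0 : {ffun 'I_j -> 'I_n} => \sum_(c : {ffun 'I_j -> 'I_n}) F c * \prod_b coord e (c0 b) (f (e`_(c b)))].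

Lemma lamf_is_linear f : linear (lamf f).
Proof.
move=> k F G; apply/ffunP => c0; rewrite !ffunE scaler_sumr -big_split /=.
apply: eq_bigr => c _; rewrite ffDE ffZE mulrDl scalerAl //.
Qed.

HB.instance Definition _ f := GRing.isLinear.Build K (ExtAmb V j) (ExtAmb V j) _ (lamf f)
  (lamf_is_linear f).

Definition lam f : 'End(ExtAmb V j) := linfun (lamf f).

Lemma lam_wedge f (v : 'I_j -> V) : lam f (wedge v) = wedge (fun a => f (v a)).
Proof.
rewrite /lam lfunE /=; apply/ffunP => c0; rewrite ffunE wedgeE.
have -> : (\matrix_(a < j, b < j) coord e (c0 b) (f (v a)) : 'M[K]_j) =
   (\matrix_(a < j, l < n) coord e l (v a)) *m
   (\matrix_(l < n, b < j) coord e (c0 b) (f e`_l)).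
  apply/matrixP => a b; rewrite !mxE.
  rewrite {1}(coord_vbasis (memvf (v a))) linear_sum linear_sum; apply: eq_bigr => l _.
  by rewrite !linearZ !mxE.
rewrite (@CB_col K); apply: eq_bigr => c _; rewrite mulrC wedgeE.
apply: congr2; first by apply: eq_bigr => b _; rewrite mxE.
by apply: congr1; apply/matrixP => a b; rewrite !mxE.
Qed.


Lemma ext_pow_top : j = n -> \dim (ext_pow j {:V}) = 1%N.
Proof.
move=> E.
have efree : free e := basis_free (vbasisP fullv).
have coE (k l : 'I_n) : coord e k (e`_l) = (l == k)%:R by rewrite coord_free.
pose c1 : {ffun 'I_j -> 'I_n} := [ffun b => cast_ord E b].
pose D (c c0 : {ffun 'I_j -> 'I_n}) : 'M[K]_j := \matrix_(a, b) ((c a == c0 b)%:R : K).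
have wD (c c0 : {ffun 'I_j -> 'I_n}) : wedge (fun a => e`_(c a)) c0 = \det (D c c0).
  by rewrite wedgeE; congr (\det _); apply/matrixP => a b; rewrite !mxE coE.
have key (c c0 : {ffun 'I_j -> 'I_n}) : D c c0 = D c c1 *m D c1 c0.
  apply/matrixP => a b; rewrite !mxE (bigD1 (cast_ord (esym E) (c a))) //=.
  rewrite !mxE /c1 ffunE cast_ordKV eqxx mul1r big1 ?addr0 // => k nk.
  rewrite !mxE ffunE; case: eqP => [h|]; last by rewrite mul0r.
  by case/eqP: nk; apply: val_inj; rewrite /= h.
set w1 := wedge (fun a => e`_(c1 a)).
have w1c1 : w1 c1 = 1.
  rewrite /w1 wD; have -> : D c1 c1 = 1%:M; last by rewrite det1.
  apply/matrixP => a b; rewrite !mxE /c1 !ffunE.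
  by congr ((_ : bool)%:R); apply/eqP/eqP => [h|->//]; apply: val_inj; move: h => /(congr1 val).
have w10 : w1 != 0 by apply/negP => /eqP h; move: w1c1; rewrite h ff0E => /eqP; rewrite eq_sym oner_eq0.
have -> : ext_pow j {:V} = <[w1]>%VS.
  apply: subv_anti; apply/andP; split.
    apply/span_subvP => x /mapP [c _ ->]; apply/vlineP; exists (\det (D c c1)).
    by apply/ffunP => c0; rewrite ffZE wD key det_mulmx /w1 wD.
  by rewrite -memvE; apply: memv_span; apply/mapP; exists c1; rewrite ?mem_enum.
by rewrite dim_vline w10.
Qed.

End Wedge.

Section Lin.
Variables (K : fieldType) (V : vectType K) (m j : nat).

Lemma bdry_is_linear : linear (@bdry K V m j).
Proof.
move=> k f g; apply/ffunP => T; rewrite !ffunE scaler_sumr -big_split /=.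
by apply: eq_bigr => a _; rewrite !ffunE scalerDr !scalerA mulrC.
Qed.

HB.instance Definition _ := GRing.isLinear.Build K (Chains V m j) (Chains V m j) _
  (@bdry K V m j) bdry_is_linear.

Lemma bdryLE f : bdryL V m j f = bdry f.
Proof. by rewrite /bdryL lfunE. Qed.

Lemma inj_at_is_linear S : linear (@inj_at K V m j S).
Proof.
move=> k x y; apply/ffunP => T; rewrite !ffunE; case: (T == S) => //.
by rewrite scaler0 addr0.
Qed.

HB.instance Definition _ S := GRing.isLinear.Build K (ExtAmb V j) (Chains V m j) _
  (@inj_at K V m j S) (inj_at_is_linear S).

Lemma inj_atLE S x : linfun (@inj_at K V m j S) x = inj_at S x.
Proof. by rewrite lfunE. Qed.

End Lin.

Section Arr.
Variables (K : fieldType) (V : vectType K) (m : nat) (H : 'I_m -> {vspace V}).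
Local Notation n := (\dim {: V}).
Hypothesis hA : hyperplane_arrangement H.
Hypothesis hE : essential H.
Hypothesis hB : boolean_lattice H.
Hypothesis hn : (1 <= n)%N.

Lemma memv_meet (S : {set 'I_m}) v : reflect (forall a, a \in S -> v \in H a) (v \in meet H S).
Proof.
rewrite /meet memvE; apply: (iffP subv_bigcapP) => h a aS; rewrite ?memvE; exact: h.
Qed.

Definition u a := vpick (meet H [set~ a]).

Lemma u_in a b : b != a -> u a \in H b.
Proof. move=> ba; move: (memv_pick (meet H [set~ a])) => /memv_meet; apply; by rewrite !inE. Qed.

Lemma meetT0 v : (forall a, v \in H a) -> v = 0.
Proof.
move=> h; have : v \in meet H setT by apply/memv_meet => a _; exact: h.
by rewrite hE memv0 => /eqP.
Qed.

Lemma u_notin a : u a \notin H a.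
Proof.
apply/negP => ua.
have u0 : u a = 0.
  apply: meetT0 => b; case: (eqVneq b a) => [->//|]; exact: u_in.
have : (meet H [set~ a] <= meet H setT)%VS.
  by rewrite hE subv0 -vpick0; apply/eqP.
by rewrite hB => /subsetP /(_ a (in_setT a)); rewrite !inE eqxx.
Qed.

Lemma u_neq0 a : u a != 0.
Proof. by apply/negP => /eqP ua; move: (u_notin a); rewrite ua rpred0. Qed.

Lemma cap_Hu a : (H a :&: <[u a]> = 0)%VS.
Proof.
apply/eqP; rewrite -subv0; apply/subvP => w /memv_capP [wH /vlineP [k wk]].
rewrite memv0; apply/eqP; move: wH; rewrite wk.
case: (eqVneq k 0) => [->|k0]; first by rewrite scale0r.
move=> /(memvZ k^-1); rewrite scalerA mulVf // scale1r => ua.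
by move: (u_notin a); rewrite ua.
Qed.

Lemma full_Hu a w : w \in (H a + <[u a]>)%VS.
Proof.
have -> : (H a + <[u a]>)%VS = fullv; last exact: memvf.
apply/eqP; rewrite eqEdim subvf /= dimv_disjoint_sum ?cap_Hu //.
rewrite dim_vline u_neq0 (proj2 hA a) addn1 prednK //.
Qed.

Definition pi a : 'End(V) := daddv_pi (H a) <[u a]>.

Lemma pi_in a w : pi a w \in H a.
Proof. exact: memv_pi. Qed.

Lemma pi_id a w : w \in H a -> pi a w = w.
Proof. by move=> wH; rewrite /pi daddv_pi_id ?cap_Hu. Qed.

Lemma pi_rest a w : exists k, w - pi a w = k *: u a.
Proof.
apply/vlineP; have := daddv_pi_add (cap_Hu a) (full_Hu a w).
move=> e; rewrite -{1}e addrC addKr; exact: memv_pi.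
Qed.

Lemma pi_u a : pi a (u a) = 0.
Proof.
have := daddv_pi_add (cap_Hu a) (full_Hu a (u a)).
rewrite (@daddv_pi_id _ _ <[u a]> (H a)) ?memv_line //; last by rewrite capvC cap_Hu.
by move/(canRL (addrK _)); rewrite subrr.
Qed.

Lemma pi_uo a b : b != a -> pi a (u b) = u b.
Proof. by move=> ba; apply: pi_id; apply: u_in; rewrite eq_sym. Qed.

Lemma span_u (S : {set 'I_m}) v : v \in meet H S ->
  exists co : 'I_m -> K, v = \sum_b co b *: u b /\ forall b, b \in S -> co b = 0.
Proof.
move=> vS.
have /fin_all_exists [co hco] := fun b => pi_rest b v.
exists co; split; last first.
  move=> b bS; move: (hco b); rewrite pi_id ?(memv_meet _ _ vS) // subrr.
  by move/esym/eqP; rewrite scaler_eq0 (negPf (u_neq0 b)) orbF => /eqP.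
apply/eqP; rewrite -subr_eq0; apply/eqP; apply: meetT0 => a.
rewrite (bigD1 a) //= opprD addrA -(hco a) opprB [v + _]addrC subrK.
apply: memvB; first exact: pi_in.
by apply: rpred_sum => b ba; apply: memvZ; apply: u_in; rewrite eq_sym.
Qed.

Lemma n_le_m : (n <= m)%N.
Proof.
have : (fullv <= <<[seq u b | b <- enum 'I_m]>>)%VS.
  apply/subvP => v _; have [co [-> _]] := @span_u set0 v (introT (memv_meet _ _) (fun a (h : a \in set0) => ltac:(by rewrite inE in h))).
  apply: rpred_sum => b _; apply: memvZ; apply: memv_span.
  by apply: map_f; rewrite mem_enum.
move/dimvS/leq_trans; apply; apply: leq_trans (dim_span _) _.
by rewrite size_map size_enum_ord.
Qed.


Variable j : nat.

Definition avoid (S : {set 'I_m}) (c : {ffun 'I_j -> 'I_m}) := [forall a, c a \notin S].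
Definition wu (c : {ffun 'I_j -> 'I_m}) := wedge (fun a => u (c a)).
Definition Wsp (S : {set 'I_m}) := (\sum_(c | avoid S c) <[wu c]>)%VS.
Definition G (S : {set 'I_m}) := ext_pow j (meet H S).

Lemma wedge_ext (v w : 'I_j -> V) : v =1 w -> wedge v = wedge w.
Proof.
by move=> vw; apply/ffunP => c; rewrite !wedgeE; congr (\det _); apply/matrixP => a b; rewrite !mxE vw.
Qed.

Lemma wu_in (S : {set 'I_m}) c : avoid S c -> wu c \in Wsp S.
Proof. by move=> av; rewrite memvE; apply: (sumv_sup c av); rewrite -memvE memv_line. Qed.

Lemma G_sub_W (S : {set 'I_m}) : (G S <= Wsp S)%VS.
Proof.
apply/span_subvP => x /mapP [c _ ->].
set y := fun a => (vbasis (meet H S))`_(c a).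
have yS a : y a \in meet H S by apply: vbasis_mem; apply: mem_nth; rewrite size_tuple.
have /fin_all_exists [co hco] := fun a => span_u (yS a).
rewrite (@wedge_ML _ _ _ _ u y (fun a b => co a b)); last by move=> a; case: (hco a).
apply: rpred_sum => c' _.
case: (boolP (avoid S c')) => av; first by apply: memvZ; apply: wu_in.
move/forallPn: av => [a]; rewrite negbK => ca.
rewrite (bigD1 a) //= (proj2 (hco a)) // mul0r scale0r; exact: rpred0.
Qed.

Lemma W_sub_G (S : {set 'I_m}) : (Wsp S <= G S)%VS.
Proof.
apply/subv_sumP => c av; rewrite -memvE.
have uS a : u (c a) \in meet H S.
  apply/memv_meet => b bS; apply: u_in; apply/negP => /eqP bc.
  by move/forallP: av => /(_ a); rewrite -bc bS.
rewrite /wu (@wedge_ML _ _ _ _ (fun k => (vbasis (meet H S))`_k) _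
   (fun a k => coord (vbasis (meet H S)) k (u (c a)))); last first.
  by move=> a; exact: coord_vbasis (uS a).
apply: rpred_sum => c' _; apply: memvZ; apply: memv_span.
by apply/mapP; exists c'; rewrite ?mem_enum.
Qed.

Lemma G_W (S : {set 'I_m}) : G S = Wsp S.
Proof. by apply: subv_anti; rewrite G_sub_W W_sub_G. Qed.

Lemma Wsp_anti (S S' : {set 'I_m}) : S \subset S' -> (Wsp S' <= Wsp S)%VS.
Proof.
move=> sS; apply/subv_sumP => c av; rewrite -memvE; apply: wu_in.
apply/forallP => a; apply/negP => caS; move/forallP: av => /(_ a).
by rewrite (subsetP sS _ caS).
Qed.

Definition P a := lam j (pi a).
Definition hits (c : {ffun 'I_j -> 'I_m}) a := [exists i, c i == a].

Lemma P_wu a c : P a (wu c) = if hits c a then 0 else wu c.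
Proof.
rewrite /P /wu lam_wedge /hits; case: existsP => [[i /eqP ci]|nh].
  by apply: (wedge_0 (a:=i)); rewrite ci pi_u.
apply: wedge_ext => i; apply: pi_uo; apply/negP => /eqP ci; apply: nh; exists i; by rewrite ci.
Qed.

Definition Qs (R : {set 'I_m}) s : 'End(ExtAmb V j) :=
  foldr (fun a acc => ((if a \in R then P a else \1 - P a) \o acc)%VF) \1%VF s.
Definition Qf (R : {set 'I_m}) := Qs R (enum 'I_m).

Lemma Qs_wu (R : {set 'I_m}) s c :
  Qs R s (wu c) = if all (fun a => (a \in R) == ~~ hits c a) s then wu c else 0.
Proof.
elim: s => [|a s IH] /=; first by rewrite id_lfunE.
rewrite comp_lfunE IH; case: (all _ s); last by rewrite linear0 andbF.
rewrite andbT; case: (a \in R); rewrite ?add_lfunE ?opp_lfunE ?id_lfunE P_wu;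
  case: (hits c a) => //=; by rewrite ?subr0 ?subrr.
Qed.

Definition condQ (R : {set 'I_m}) c := [forall a, (a \in R) == ~~ hits c a].

Lemma Q_wu (R : {set 'I_m}) c : Qf R (wu c) = if condQ R c then wu c else 0.
Proof.
rewrite /Qf Qs_wu; congr (if _ then _ else _).
by apply/allP/forallP => h a; [apply: h; rewrite mem_enum | move=> _; apply: h].
Qed.

Lemma img_W (f : 'End(ExtAmb V j)) (S : {set 'I_m}) (U : {vspace ExtAmb V j}) :
  (forall c, avoid S c -> f (wu c) \in U) -> forall x, x \in Wsp S -> f x \in U.
Proof.
move=> h x xW; have : (f @: Wsp S <= U)%VS.
  by rewrite limg_sum; apply/subv_sumP => c av; rewrite limg_line -memvE; exact: h.
by move/subvP; apply; exact: memv_img.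
Qed.

Lemma Q1 (R S : {set 'I_m}) x : x \in Wsp S -> Qf R x \in Wsp (S :|: R).
Proof.
apply: img_W => c av; rewrite Q_wu; case: ifP => cq; last exact: rpred0.
apply: wu_in; apply/forallP => a; rewrite in_setU negb_or.
move/forallP: av => /(_ a) -> /=.
move/forallP: cq => /(_ (c a)) /eqP ->; rewrite negbK; apply/existsP; by exists a.
Qed.

Lemma condQ_eq (R : {set 'I_m}) c : condQ R c -> R = ~: [set a | hits c a].
Proof. by move/forallP => h; apply/setP => a; rewrite !inE; apply/eqP; apply: h. Qed.

Lemma Q2 x : x \in Wsp set0 -> \sum_R Qf R x = x.
Proof.
move=> xW; apply/eqP; rewrite -subr_eq0 -memv0.
have -> : \sum_R Qf R x - x = (\sum_R Qf R - \1%VF) x.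
  by rewrite add_lfunE opp_lfunE id_lfunE sum_lfunE.
move: x xW; apply: img_W => c _.
rewrite add_lfunE opp_lfunE id_lfunE sum_lfunE memv0 subr_eq0.
rewrite (bigD1 (~: [set a | hits c a])) //= Q_wu.
have -> : condQ (~: [set a | hits c a]) c.
  by apply/forallP => a; rewrite !inE.
rewrite big1 ?addr0 // => R ne; rewrite Q_wu; case: ifP => // /condQ_eq e.
by rewrite e eqxx in ne.
Qed.

Lemma Q3 (T : {set 'I_m}) x : x \in Wsp T -> (T != set0) || (j != n) -> Qf set0 x = 0.
Proof.
move=> xW h; apply/eqP; rewrite -memv0; move: x xW; apply: img_W => c av.
rewrite Q_wu; case: ifP => cq; last exact: rpred0.
have allh a : hits c a by move/forallP: cq => /(_ a); rewrite inE eq_sym eqbF_neg negbK.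
case/orP: h => [/set0Pn [a aT] | jn].
  case/existsP: (allh a) => i /eqP cia; move/forallP: av => /(_ i).
  by rewrite cia aT.
have mj : (m <= j)%N.
  have : [set: 'I_m] \subset c @: [set: 'I_j].
    apply/subsetP => a _; case/existsP: (allh a) => i /eqP <-.
    by apply: imset_f; rewrite inE.
  move/subset_leq_card; rewrite cardsT card_ord => /leq_trans; apply.
  by apply: leq_trans (leq_imset_card _ _) _; rewrite cardsT card_ord.
have nj : (n < j)%N by rewrite ltn_neqAle eq_sym jn (leq_trans (n_le_m) mj).
have : wu c \in G set0 by apply: (subvP (W_sub_G set0)); apply: wu_in; apply/forallP => a; rewrite inE.
rewrite /G ext_pow_small //; apply: leq_ltn_trans nj; apply: dimvS; exact: subvf.
Qed.


Lemma img_inj S (U : {vspace ExtAmb V j}) w :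
  w \in (linfun (@inj_at K V m j S) @: U)%VS -> w S \in U /\ forall T, T != S -> w T = 0.
Proof.
case/memv_imgP => x xU ->; rewrite inj_atLE; split; first by rewrite ffunE eqxx.
by move=> T TS; rewrite ffunE (negPf TS).
Qed.

Lemma chain_spP i f : f \in chain_sp H j i ->
  (forall T : {set 'I_m}, f T \in G T) /\ (forall T : {set 'I_m}, #|T| != i -> f T = 0).
Proof.
case/memv_sumP => vs hvs ->.
have hz (T S : {set 'I_m}) : #|S| == i -> T != S -> vs S T = 0.
  by move=> Si TS; apply: (proj2 (img_inj (hvs S Si))).
split => T; rewrite sum_ffunE.
  case: (boolP (#|T| == i)) => Ti.
    rewrite (bigD1 T) //= big1 ?addr0; first exact: (proj1 (img_inj (hvs T Ti))).
    by move=> S /andP [Si ST]; apply: hz; rewrite // eq_sym.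
  rewrite big1 ?rpred0 // => S Si; apply: hz => //; apply/eqP => TS.
  by move: Ti; rewrite TS Si.
move=> Ti; rewrite big1 // => S Si; apply: hz => //; apply/eqP => TS.
by move: Ti; rewrite TS Si.
Qed.

Lemma chain_spI i (f : Chains V m j) : (forall T : {set 'I_m}, f T \in G T) -> (forall T : {set 'I_m}, #|T| != i -> f T = 0) ->
  f \in chain_sp H j i.
Proof.
move=> fG f0.
have -> : f = \sum_(S : {set 'I_m} | #|S| == i) inj_at S (f S).
  apply/ffunP => T; rewrite sum_ffunE.
  case: (boolP (#|T| == i)) => Ti.
    rewrite (bigD1 T) //= big1 ?addr0; first by rewrite ffunE eqxx.
    by move=> S /andP [_ ST]; rewrite ffunE eq_sym (negPf ST).
  rewrite f0 // big1 // => S Si; rewrite ffunE; case: eqP => // TS.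
  by move: Ti; rewrite TS Si.
apply: memv_sumr => S _; rewrite -inj_atLE; exact: memv_img.
Qed.

Definition eps (a : 'I_m) (T : {set 'I_m}) : K := (-1) ^+ #|[set b in T | (b < a)%N]|.

Definition hom (a : 'I_m) (f : Chains V m j) : Chains V m j :=
  [ffun T : {set 'I_m} => if a \in T then eps a (T :\ a) *: f (T :\ a) else 0].

Lemma eps2 a T : eps a T * eps a T = 1.
Proof. by rewrite /eps -expr2 sqrr_sign. Qed.

Lemma cnt_U1 (x a : 'I_m) (X : {set 'I_m}) : x \notin X ->
  #|[set b in x |: X | (b < a)%N]| = ((x < a)%N + #|[set b in X | (b < a)%N]|)%N.
Proof.
move=> xX; case: (ltnP x a) => xa.
  have -> : [set b in x |: X | (b < a)%N] = x |: [set b in X | (b < a)%N].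
    by apply/setP => b; rewrite !inE; case: eqP => // ->; rewrite xa.
  by rewrite cardsU1 inE (negPf xX).
rewrite add0n; apply: eq_card => b; rewrite !inE; case: eqP => // ->.
by rewrite (negPf xX) ltnNge xa.
Qed.

Lemma cone a f : bdry (hom a f) + hom a (bdry f) = f.
Proof.
apply/ffunP => T; rewrite ffDE !ffunE.
under eq_bigr => b _ do rewrite ffunE.
case: (boolP (a \in T)) => aT.
  have E2 (F : 'I_m -> ExtAmb V j) : \sum_(b < m | (b \notin T :\ a) && (b != a)) F b = \sum_(b | b \notin T) F b.
    apply: eq_bigl => b; rewrite !inE; case: (eqVneq b a) => [->|] /=; [by rewrite aT | by rewrite andbT].
  rewrite [X in _ + _ *: X](bigD1 a) /=; last by rewrite !inE eqxx.
  rewrite E2 setD1K // scalerDr scalerA eps2 scale1r addrCA scaler_sumr -big_split /=.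
  rewrite big1 ?addr0 // => b bT.
  have ba : b != a by apply/negP => /eqP ba; move: bT; rewrite ba aT.
  have -> : (b |: T) :\ a = b |: (T :\ a).
    by apply/setP => x; rewrite !inE; case: (eqVneq x b) => [->|_] /=; rewrite ?ba ?andbT.
  rewrite in_setU1 aT orbT !scalerA -scalerDl.
  have bTa : b \notin T :\ a by rewrite in_setD1 negb_and bT orbT.
  have -> : #|[set b0 in T | (b0 < b)%N]| = ((a < b)%N + #|[set b0 in T :\ a | (b0 < b)%N]|)%N.
    by rewrite -{1}(setD1K aT) cnt_U1 // in_setD1 eqxx.
  rewrite /eps cnt_U1 // !exprD.
  set x := (-1) ^+ #|[set b0 in T :\ a | (b0 < b)%N]|.
  set y := (-1) ^+ #|[set b0 in T :\ a | (b0 < a)%N]|.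
  case: (ltngtP a b) => [ab|ba'|e]; last by case/eqP: ba; apply: val_inj.
    by rewrite expr1 expr0 mulN1r mul1r mulNr [y * x]mulrC addNr scale0r.
  by rewrite expr1 expr0 mulN1r mul1r mulrN [y * x]mulrC addNr scale0r.
rewrite addr0 (bigD1 a) //= big1 ?addr0; last first.
  by move=> b /andP [_ ba]; rewrite in_setU1 (eq_sym a b) (negPf ba) (negPf aT) scaler0.
rewrite in_setU1 eqxx /= scalerA.
have -> : (a |: T) :\ a = T by rewrite setU1K.
by rewrite eps2 scale1r.
Qed.

Definition pw (g : 'End(ExtAmb V j)) (f : Chains V m j) : Chains V m j := [ffun T : {set 'I_m} => g (f T)].

Lemma bdry_pw g f : bdry (pw g f) = pw g (bdry f).
Proof.
apply/ffunP => T; rewrite !ffunE linear_sum; apply: eq_bigr => a _.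
by rewrite linearZ ffunE.
Qed.


Lemma hom0 a : hom a 0 = 0.
Proof. by apply/ffunP => T; rewrite !ffunE; case: ifP => // _; rewrite scaler0. Qed.

Lemma pw0 g : pw g 0 = 0.
Proof. by apply/ffunP => T; rewrite !ffunE linear0. Qed.

Lemma acyclic i : (i != 0%N) || (j != n) ->
  (chain_sp H j i :&: lker (bdryL V m j) <= bdryL V m j @: chain_sp H j i.+1)%VS.
Proof.
move=> hij; apply/subvP => f /memv_capP [fC]; rewrite memv_ker bdryLE => /eqP df0.
have [fG f0] := chain_spP fC.
have fW T : f T \in Wsp T by rewrite -G_W.
have fW0 T : f T \in Wsp set0 by apply: (subvP (Wsp_anti (sub0set T))).
pose g (R : {set 'I_m}) := if [pick a in R] is Some a then hom a (pw (Qf R) f) else 0.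
have dec : f = \sum_R pw (Qf R) f.
  by apply/ffunP => T; rewrite sum_ffunE; under eq_bigr => R _ do rewrite ffunE; rewrite Q2.
have Q0 : pw (Qf set0) f = 0.
  apply/ffunP => T; rewrite !ffunE; case: (boolP (#|T| == i)) => Ti; last by rewrite f0 // linear0.
  apply: (Q3 (fW T)); case: (eqVneq T set0) => //= T0.
  by move: Ti hij; rewrite T0 cards0 => /eqP <-.
have gd R : bdry (g R) = pw (Qf R) f.
  rewrite /g; case: pickP => [a aR | none].
    by rewrite -{2}(cone a (pw (Qf R) f)) bdry_pw df0 pw0 hom0 addr0.
  have -> : R = set0 by apply/setP => x; rewrite inE; apply/negbTE; rewrite none.
  by rewrite Q0 linear0.
have gC R : g R \in chain_sp H j i.+1.
  rewrite /g; case: pickP => [a aR | _]; last exact: rpred0.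
  apply: chain_spI => T; rewrite !ffunE; case: ifP => aT; rewrite ?rpred0 //.
    rewrite G_W; apply: memvZ.
    apply: (subvP (Wsp_anti _)) (Q1 R (fW (T :\ a))).
    apply/subsetP => x xT; rewrite in_setU in_setD1 xT andbT.
    by case: (eqVneq x a) => [->|]; rewrite ?aR ?orbT.
  move=> Ti; rewrite f0 ?linear0 ?scaler0 //.
  by apply: contra Ti; rewrite (cardsD1 a T) aT add1n => /eqP ->.
rewrite dec (eq_bigr (fun R => bdry (g R))); last by move=> R _; rewrite gd.
rewrite -linear_sum /= -bdryLE; apply: memv_img; exact: rpred_sum.
Qed.

Lemma meet0 : meet H set0 = fullv.
Proof. by rewrite /meet big_pred0 // => a; rewrite inE. Qed.

Lemma top_C0 : (chain_sp H j 0 <= lker (bdryL V m j))%VS.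
Proof.
apply/subvP => f fC; have [_ f0] := chain_spP fC.
rewrite memv_ker bdryLE; apply/eqP/ffunP => T; rewrite !ffunE.
rewrite big1 // => a _; rewrite f0 ?scaler0 //.
by rewrite cards_eq0; apply/set0Pn; exists a; rewrite in_setU1 eqxx.
Qed.

Lemma top_C1 : j = n -> chain_sp H j 1 = 0%VS.
Proof.
move=> jn; apply/eqP; rewrite -subv0; apply/subvP => f fC; rewrite memv0.
have [fG f0] := chain_spP fC.
apply/eqP/ffunP => T; rewrite ffunE.
case: (boolP (#|T| == 1%N)) => T1; last exact: f0.
case/cards1P: T1 => a ->.
have := fG [set a]; rewrite /G ext_pow_small ?memv0 => [/eqP //|].
rewrite jn; apply: (@leq_ltn_trans (\dim (H a))).
  by apply: dimvS; rewrite /meet (bigD1 a) ?set11 //=; exact: capvSl.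
by rewrite (proj2 hA a) prednK.
Qed.

Lemma top_dimC0 : j = n -> \dim (chain_sp H j 0) = 1%N.
Proof.
move=> jn.
have -> : chain_sp H j 0 = (linfun (@inj_at K V m j set0) @: G set0)%VS.
  by rewrite /chain_sp (big_pred1 set0) // => S; rewrite /= cards_eq0.
rewrite limg_dim_eq; first by rewrite /G meet0 ext_pow_top.
apply/eqP; rewrite -subv0; apply/subvP => x /memv_capP [_]; rewrite memv_ker inj_atLE.
move=> /eqP h; have := congr1 (fun F : Chains V m j => F set0) h; rewrite /= ffunE eqxx ff0E => ->; exact: mem0v.
Qed.

End Arr.

Theorem proposition7 (K : fieldType) (V : vectType K) (m : nat)
  (H : 'I_m -> {vspace V}) :
  hyperplane_arrangement H -> essential H -> boolean_lattice H ->
  (1 <= rkL H)%N ->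
  forall i j : nat,
    dimHC H j i = (if (i == 0%N) && (j == rkL H) then 1%N else 0%N).
Proof.
move=> hA hE hB hn i j.
have rk : rkL H = \dim {:V} by rewrite /rkL hE dimv0 subn0.
rewrite rk in hn *.
case: (boolP ((i == 0%N) && (j == \dim {:V}))) => [/andP [/eqP -> /eqP jn] | hij].
  rewrite /dimHC (capv_idPl (top_C0 H j)) (top_C1 hA hn jn) limg0 dimv0 subn0.
  exact: top_dimC0.
rewrite /dimHC; apply/eqP; rewrite subn_eq0; apply: dimvS.
by apply: (acyclic hA hE hB hn); rewrite -negb_and.
Qed.
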